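(* Let $G$ and $H$ be graphs such that the direct product $G\times H$ is a balanced distance magic graph, and let $\ell$ be a balanced distance magic labeling of $G\times H$ in which $(g,h)$ and $(g',h')$ are twins, where $g\neq g'$ and $h\neq h'$. Let $\widehat\ell$ be obtained from $\ell$ by exchanging the labels of $(g',h')$ and $(g',h)$, i.e. $\widehat\ell(g',h)=\ell(g',h')$, $\widehat\ell(g',h')=\ell(g',h)$, and $\widehat\ell(a,b)=\ell(a,b)$ for all other vertices. Then $\widehat\ell$ is a balanced distance magic labeling of $G\times H$ in which $(g,h)$ and $(g',h)$ are twins.
   Context: All graphs are finite and simple. For a graph $G$ and vertex $x$, $N(x)=N_G(x)$ is the (open) neighborhood of $x$. A distance magic labeling of a graph $G$ of order $N$ is a bijection $\ell\colon V(G)\to\{1,\dots,N\}$ for which there is a constant $k$ such that the weight $w(x)=\sum_{y\in N(x)}\ell(y)$ equals $k$ for every $x\in V(G)$. A balanced distance magic labeling of a graph $G$ with an even number $N$ of vertices is a distance magic labeling $\ell$ such that for every $w\in V(G)$: whenever $u\in N(w)$ has $\ell(u)=i$, there is $v\in N(w)$ with $\ell(v)=N+1-i$. Under such $\ell$, the vertices labeled $i$ and $N+1-i$ are called twins (with respect to $\ell$). $G$ is a balanced distance magic graph if it has an even number of vertices and admits a balanced distance magic labeling. The direct product $G\times H$ has vertex set $V(G)\times V(H)$, with $(g,h)$ adjacent to $(g',h')$ iff $gg'\in E(G)$ and $hh'\in E(H)$. *)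

(* Defs.v *)
From mathcomp Require Import all_boot.
Set Implicit Arguments. Unset Strict Implicit. Unset Printing Implicit Defensive.

Definition simple_graph (T : finType) (e : rel T) : Prop :=
  symmetric e /\ irreflexive e.

Definition nbhd (T : finType) (e : rel T) (x : T) : {set T} := [set y | e x y].

Definition direct_prod (TG TH : finType) (eG : rel TG) (eH : rel TH)
  : rel (TG * TH) := fun p q => eG p.1 q.1 && eH p.2 q.2.

Definition weight (T : finType) (e : rel T) (l : T -> nat) (x : T) : nat :=
  \sum_(y in nbhd e x) l y.

(* l is a bijection V(G) -> {1,...,N}, N = |V(G)| (injective + range in
   [1,N] on a set of size N). *)
Definition labeling (T : finType) (l : T -> nat) : Prop :=
  injective l /\ forall x, 1 <= l x <= #|T|.

Definition distance_magic_labeling (T : finType) (e : rel T) (l : T -> nat)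
  : Prop :=
  labeling l /\ exists k, forall x, weight e l x = k.

Definition balanced_dm_labeling (T : finType) (e : rel T) (l : T -> nat)
  : Prop :=
  ~~ odd #|T| /\ distance_magic_labeling e l /\
  forall w u, u \in nbhd e w ->
    exists2 v, v \in nbhd e w & l v = #|T|.+1 - l u.

Definition balanced_dm_graph (T : finType) (e : rel T) : Prop :=
  exists l, balanced_dm_labeling e l.

Definition twins (T : finType) (l : T -> nat) (x y : T) : Prop :=
  l y = #|T|.+1 - l x.

Definition swap_labels (T : finType) (l : T -> nat) (a b : T) : T -> nat :=
  fun x => if x == a then l b else if x == b then l a else l x.

(* Main.v *)
Require Import Defs.
From mathcomp Require Import all_boot.
From mathcomp Require Import zify.

Theorem lemma1 (TG TH : finType) (eG : rel TG) (eH : rel TH)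
  (HG : simple_graph eG) (HH : simple_graph eH)
  (Hbal : balanced_dm_graph (direct_prod eG eH))
  (l : TG * TH -> nat) (Hl : balanced_dm_labeling (direct_prod eG eH) l)
  (g g' : TG) (h h' : TH)
  (Htw : twins l (g, h) (g', h')) (Hg : g != g') (Hh : h != h') :
  balanced_dm_labeling (direct_prod eG eH) (swap_labels l (g', h') (g', h)) /\
  twins (swap_labels l (g', h') (g', h)) (g, h) (g', h).
Proof.
set e := direct_prod eG eH.
set a := (g', h'). set b := (g', h).
case: Hl => Hev [[[Linj Lrng] [k Hk]] Hbl].
rewrite /twins in Htw.
set sig := fun x : TG * TH => if x == a then b else if x == b then a else x.
have Hsw : forall x, swap_labels l a b x = l (sig x).
  by move=> x; rewrite /swap_labels /sig; case: (x == a) => //; case: (x == b).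
have sigK : forall x, sig (sig x) = x.
  move=> x; rewrite /sig.
  have ab : (a == b) = false by apply/negbTE; rewrite /a /b xpair_eqE negb_and eq_sym Hh orbT.
  have ba : (b == a) = false by rewrite eq_sym ab.
  case: (x =P a) => [->|xa]; first by rewrite eqxx ba.
  case: (x =P b) => [->|xb]; first by rewrite eqxx.
  by rewrite (introF eqP xa) (introF eqP xb).
have sig_inj : injective sig by apply: (can_inj sigK).
have inN : forall w y, (y \in nbhd e w) = e w y by move=> w y; rewrite inE.
have lgh := Lrng (g, h). have la := Lrng a.
have P1 : forall w, e w (g, h) = e w a.
  move=> w; apply/idP/idP => H.
  - case: (Hbl w (g, h)) => [|v Hv Hlv]; first by rewrite inN.
    have -> : a = v by apply: Linj; rewrite Hlv Htw.
    by rewrite -inN.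
  - case: (Hbl w a) => [|v Hv Hlv]; first by rewrite inN.
    have -> : (g, h) = v by apply: Linj; rewrite Hlv Htw; lia.
    by rewrite -inN.
have Cl : forall w, e w a = e w b.
  case=> x y; apply/idP/idP => H.
  - have := P1 (x, y); rewrite H => /andP [H1 H2].
    move: H => /andP [H3 _]; by rewrite /e /direct_prod /= H3 H2.
  - move: (H) => /andP [/= H1 H2].
    case: (pickP (eG g)) => [x0 Hx0|Hno].
    + have : e (x0, y) (g, h) by rewrite /e /direct_prod /= H2 andbT (proj1 HG).
      rewrite P1 => /andP [_ /= H4]; by rewrite /e /direct_prod /= H1 H4.
    + exfalso.
      have W0 : weight e l (g, h) = 0.
        rewrite /weight big_pred0 // => z; rewrite inN /e /direct_prod /= Hno.
        done.
      have := Hk (x, y); rewrite -(Hk (g, h)) W0 /weight (bigD1 b) ?inN //.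
      have := Lrng b; move=> /andP[Hb _] /eqP; rewrite addn_eq0 => /andP[/eqP Hb0 _]; by rewrite Hb0 in Hb.
have sigN : forall w y, (sig y \in nbhd e w) = (y \in nbhd e w).
  move=> w y; rewrite !inN /sig.
  case: eqP => [->|_]; first by rewrite Cl.
  by case: eqP => [->|_]; first by rewrite Cl.
split; last first.
  rewrite /twins Hsw /sig.
  have -> : ((g', h) == a) = false.
    by apply/negbTE; rewrite /a xpair_eqE negb_and Hh orbT.
  rewrite eqxx Hsw /sig.
  have -> : ((g, h) == a) = false by apply/negbTE; rewrite /a xpair_eqE negb_and Hg.
  have -> : ((g, h) == b) = false by apply/negbTE; rewrite /b xpair_eqE negb_and Hg.
  by [].
split; first exact: Hev.
split.
  split.
    split.
      move=> x y; rewrite !Hsw => /Linj; exact: sig_inj.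
    by move=> x; rewrite Hsw.
  exists k => w; rewrite -(Hk w) /weight.
  under eq_bigr => y _ do rewrite Hsw.
  rewrite [RHS](reindex_inj sig_inj) /=.
  by apply: eq_bigl => y; rewrite sigN.
move=> w u Hu; rewrite Hsw.
case: (Hbl w (sig u)) => [|v0 Hv0 Hlv0]; first by rewrite sigN.
exists (sig v0); first by rewrite sigN.
by rewrite Hsw sigK.
Qed.
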